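(* A graph $G$ (without isolated vertices) is $2$-$\gamma_{\rm tg}$-critical if and only if $G$ is a complete graph $K_n$ with $n \ge 2$.
   Context: Total domination game on a graph without isolated vertices: Dominator and Staller alternately choose vertices, each chosen vertex must be adjacent to some vertex not yet totally dominated; the game ends when no legal move exists; Dominator minimizes, Staller maximizes the number of moves; $\gamma_{\rm tg}(G)$ is the number of moves in the Dominator-start game under optimal play. $G|v$ is $G$ with $v$ declared already totally dominated, with $\gamma_{\rm tg}(G|v)$ defined analogously. $G$ is $\gamma_{\rm tg}$-critical if $\gamma_{\rm tg}(G|v)<\gamma_{\rm tg}(G)$ for every vertex $v$, and $k$-$\gamma_{\rm tg}$-critical if moreover $\gamma_{\rm tg}(G)=k$. *)

(* Defs.v *)
From mathcomp Require Import all_boot.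
Set Implicit Arguments. Unset Strict Implicit. Unset Printing Implicit Defensive.

Section TotalDominationGame.
Variables (T : finType) (e : rel T).

Definition nbhd (x : T) : {set T} := [set y | e x y].

(* S = set of vertices already totally dominated (by chosen vertices, or declared).
   A vertex x is a legal move iff it is adjacent to some vertex not yet totally dominated. *)
Definition legal (S : {set T}) (x : T) : bool := [exists y, e x y && (y \notin S)].

Definition after (S : {set T}) (x : T) : {set T} := S :|: nbhd x.

(* Number of remaining moves under optimal play, from position S,
   with Dominator (minimizer) to move iff [dom] is true.  [n] is fuel;
   every legal move strictly enlarges S, so fuel #|T| is sufficient.
   When Dominator has a legal move, the minimum over legal moves is taken
   with neutral element n.+1, which is never smaller than any option
   (all values computed with fuel n are <= n). *)
Fixpoint game_val (n : nat) (dom : bool) (S : {set T}) : nat :=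
  match n with
  | 0 => 0
  | n'.+1 =>
    if [exists x, legal S x] then
      if dom then \big[minn/n'.+1]_(x | legal S x) (game_val n' false (after S x)).+1
      else \max_(x | legal S x) (game_val n' true (after S x)).+1
    else 0
  end.

Definition gamma_tg : nat := game_val #|T| true set0.

Definition gamma_tg_v (v : T) : nat := game_val #|T| true [set v].

Definition gamma_tg_critical : Prop := forall v : T, gamma_tg_v v < gamma_tg.

Definition k_gamma_tg_critical (k : nat) : Prop := gamma_tg_critical /\ gamma_tg = k.

Definition simple_graph : Prop := symmetric e /\ irreflexive e.
Definition no_isolated : Prop := forall x : T, exists y, e x y.

Definition complete_graph : Prop := forall x y : T, x != y -> e x y.

End TotalDominationGame.

(* Main.v *)
Require Import Defs.
From mathcomp Require Import all_boot.
Set Implicit Arguments. Unset Strict Implicit.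

Lemma gvS (T : finType) (e : rel T) n b (S : {set T}) : game_val e n.+1 b S =
  if [exists x, legal e S x] then
    (if b then \big[minn/n.+1]_(x | legal e S x) (game_val e n false (after e S x)).+1
     else \max_(x | legal e S x) (game_val e n true (after e S x)).+1)
  else 0.
Proof. by []. Qed.

Lemma gv_nolegal (T : finType) (e : rel T) n b (S : {set T}) :
  ~~ [exists x, legal e S x] -> game_val e n b S = 0.
Proof. by case: n => [|n] // H; rewrite gvS (negbTE H). Qed.

Lemma min_le (I : eqType) (r : seq I) (P : pred I) F k x0 :
  x0 \in r -> P x0 -> \big[minn/k]_(i <- r | P i) F i <= F x0.
Proof.
elim: r => [|a r IH] //; rewrite inE big_cons.
case/orP => [/eqP -> Px| xr Px]; first by rewrite Px geq_minl.
case: (P a); last exact: IH.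
exact: leq_trans (geq_minr _ _) (IH xr Px).
Qed.

Lemma all_in (T : finType) (e : rel T) (S : {set T}) : symmetric e -> no_isolated e ->
  ~~ [exists x, legal e S x] -> forall y, y \in S.
Proof.
move=> Hs Hn /existsPn H y; case: (Hn y) => z eyz.
have /existsPn/(_ y) := H z.
by rewrite (Hs z y) eyz /= negbK.
Qed.

Lemma full_nolegal (T : finType) (e : rel T) (S : {set T}) :
  (forall y, y \in S) -> ~~ [exists x, legal e S x].
Proof.
move=> H; apply/existsPn => x; apply/existsPn => y.
by rewrite H andbF.
Qed.

Theorem proposition4p1 (T : finType) (e : rel T) :
  simple_graph e -> no_isolated e ->
  (k_gamma_tg_critical e 2 <-> (complete_graph e /\ 2 <= #|T|)).
Proof.
move=> [Hs Hi] Hn; split.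
- case=> Hcrit H2.
  have HT : 0 < #|T|.
    by move: H2; rewrite /gamma_tg; case: #|T|.
  have [v0 _] := card_gt0P HT.
  case: (Hn v0) => y0 evy.
  have nyv : v0 != y0 by apply/eqP => E; move: evy; rewrite E Hi.
  have H2T : 1 < #|T| by have := max_card [set v0; y0]; rewrite cards2 nyv.
  split => //.
  move=> v y nvy; have := Hcrit v; rewrite H2 /gamma_tg_v.
  move: H2T; case E: #|T| => [|[|m]] // _.
  rewrite gvS; case: ifP => [_|/negbT NL]; last first.
    case: (Hn v) => z evz.
    have := all_in Hs Hn NL z; rewrite inE => /eqP Ez.
    by move: evz; rewrite Ez Hi.
  case: (boolP [exists x, legal e [set v] x &&
                  (game_val e m.+1 false (after e [set v] x) == 0)]).
    case/existsP => x /andP [Lx /eqP G0] _.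
    have NL : ~~ [exists z, legal e (after e [set v] x) z].
      apply/negP => /existsP [z Lz].
      move: G0; rewrite gvS; case: ifP => [_|]; last by move=> /negbT/existsPn/(_ z); rewrite Lz.
      move=> G0; have := @leq_bigmax_cond T _ (fun w => (game_val e m true (after e (after e [set v] x) w)).+1) z Lz.
      by rewrite G0.
    have AI := all_in Hs Hn NL.
    have xv : x = v.
      case: (Hn x) => z exz.
      have := AI x; rewrite /after /nbhd !inE Hi orbF.
      by move/eqP.
    have := AI y; rewrite /after /nbhd !inE xv.
    by rewrite eq_sym (negbTE nvy).
  move/existsPn => Hall.
  have : 2 <= \big[minn/m.+2]_(x | legal e [set v] x)
                 (game_val e m.+1 false (after e [set v] x)).+1.
    apply: (big_ind (fun n => 2 <= n)) => //.
      by move=> a b Ha Hb; rewrite leq_min Ha Hb.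
    move=> x Lx; have := Hall x; rewrite Lx /= ltnS lt0n; done.
  by move=> H1 H2'; move: (leq_trans H1 H2').
- case=> Hc H2T.
  have [v0 _] := card_gt0P (ltnW H2T).
  move: H2T; rewrite /k_gamma_tg_critical /gamma_tg_critical /gamma_tg /gamma_tg_v.
  case E: #|T| => [|[|m]] // _.
  have Lex : forall (S : {set T}) (x : T), x \notin S -> exists z, legal e S z.
    move=> S x xS; case: (Hn x) => z exz; exists z; apply/existsP; exists x.
    by rewrite (Hs z x) exz xS.
  have Staller : forall x, game_val e m.+1 false (after e set0 x) = 1.
    move=> x; rewrite gvS.
    have xS : x \notin after e set0 x by rewrite /after /nbhd !inE Hi.
    have [z0 Lz0] := Lex _ _ xS.
    rewrite ifT; last by apply/existsP; exists z0.
    apply/eqP; rewrite eqn_leq; apply/andP; split.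
      apply/bigmax_leqP => z Lz; rewrite ltnS leqn0; apply/eqP.
      apply: gv_nolegal; apply: full_nolegal => y.
      rewrite /after /nbhd !inE.
      case: (eqVneq x y) => [<-|nxy]; last by rewrite Hc.
      case/existsP: Lz => w /andP [ezw]; rewrite /after /nbhd !inE /=.
      case: (eqVneq x w) => [Exw|nxw]; first by rewrite Exw ezw orbT.
      by rewrite Hc.
    exact: leq_trans (@leq_bigmax_cond T _ (fun w => (game_val e m true (after e (after e set0 x) w)).+1) z0 Lz0).
  have G2 : game_val e m.+2 true set0 = 2.
    rewrite gvS ifT; last first.
      have [z Lz] := Lex set0 v0 (negbT (in_set0 _)); by apply/existsP; exists z.
    have [z Lz] := Lex set0 v0 (negbT (in_set0 _)).
    apply/eqP; rewrite eqn_leq; apply/andP; split.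
      apply: leq_trans (@min_le T (index_enum T) _ _ _ z (mem_index_enum z) Lz) _.
      by rewrite Staller.
    apply: (big_ind (fun n => 2 <= n)) => //.
      by move=> a b Ha Hb; rewrite leq_min Ha Hb.
    by move=> x _; rewrite Staller.
  split; last exact: G2.
  move=> v; rewrite G2 gvS.
    have vS : v \notin set0 :|: [set y | y != v].
      by rewrite !inE eqxx.
    case: (Hn v) => y evy.
    rewrite ifT; last first.
      apply/existsP; exists v; apply/existsP; exists y; rewrite evy inE.
      by apply/eqP => E'; move: evy; rewrite E' Hi.
    have Lv : legal e [set v] v.
      apply/existsP; exists y; rewrite evy inE.
      by apply/eqP => E'; move: evy; rewrite -E' Hi.
    apply: leq_ltn_trans (@min_le T (index_enum T) _ _ _ v (mem_index_enum v) Lv) _.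
    rewrite gv_nolegal //; apply: full_nolegal => w.
    rewrite /after /nbhd !inE; case: (eqVneq v w) => [->|nvw]; first by [].
    by rewrite Hc // orbT.
Qed.
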